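(* Let $0<s<1$. Define $$J_s(r,\widetilde r)=\frac{r}{\widetilde r}\min\Big\{1,\frac{(3-s)\widetilde r-2}{(1-s)r-2}\Big\}$$ on $$K(s)=\Big[2,\frac{6}{(3-4s)_+}\Big]\times\Big[\max\Big\{1,\frac{6}{7-4s}\Big\},\frac{2}{2-s}\Big].$$ Then $$\sup_{(r,\widetilde r)\in K(s)}J_s(r,\widetilde r)=\begin{cases}\frac{3-s}{1-s}, & \frac12\leq s<1,\\[2pt] \frac{7-4s}{3-4s}, & \frac14\leq s\leq\frac12,\\[2pt] \frac{6}{3-4s}, & 0<s\leq\frac14.\end{cases}$$ Moreover, the supremum is attained in each case: (i) if $0<s\leq\frac14$, at $(r,\widetilde r)=(\frac{6}{3-4s},1)$; (ii) if $\frac14\leq s\leq\frac12$, at $(r,\widetilde r)=(\frac6{3-4s},\frac6{7-4s})$; (iii) if $\frac12\le s<1$, at the points with $\widetilde r=\frac{1-s}{3-s}r$ and $$\frac{6}{7-4s}\cdot\frac{3-s}{1-s}\leq r\leq\begin{cases}\frac{6}{3-4s}, & \frac12\leq s\leq 3-\sqrt6,\\ \frac{2}{2-s}\cdot\frac{3-s}{1-s}, & 3-\sqrt6\leq s<1.\end{cases}$$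
   Context: Here $x_+=\max(x,0)$, with the convention $\frac60=\infty$. *)

(* Defs.v *)
From Stdlib Require Import Reals Lra.
Open Scope R_scope.

Definition J (s r rt : R) : R :=
  r / rt * Rmin 1 (((3 - s) * rt - 2) / ((1 - s) * r - 2)).

(* Membership in K(s) = [2, 6/(3-4s)_+] x [max{1, 6/(7-4s)}, 2/(2-s)],
   with the convention 6/0 = +infinity: the upper bound on r is only
   active when 3 - 4s > 0. *)
Definition inK (s r rt : R) : Prop :=
  2 <= r /\ (0 < 3 - 4 * s -> r <= 6 / (3 - 4 * s)) /\
  Rmax 1 (6 / (7 - 4 * s)) <= rt /\ rt <= 2 / (2 - s).

(* Main.v *)
Require Import Defs.
From Stdlib Require Import Reals Lra Psatz.
Open Scope R_scope.

Lemma J_le_ratio s r rt : 0 <= r -> 0 < rt -> J s r rt <= r / rt.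
Proof.
  intros Hr Hrt. unfold J.
  assert (0 <= r / rt) by (unfold Rdiv; apply Rmult_le_pos; [lra| left; apply Rinv_0_lt_compat; lra]).
  rewrite <- (Rmult_1_r (r/rt)) at 2.
  apply Rmult_le_compat_l; [lra | apply Rmin_l].
Qed.

Lemma J_le_B s r rt : 0 < s -> s < 1 -> 0 < r -> 1 <= rt ->
  J s r rt <= (3 - s) / (1 - s).
Proof.
  intros Hs0 Hs1 Hr Hrt.
  set (B := (3 - s) / (1 - s)).
  assert (HB : B * (1 - s) = 3 - s) by (unfold B; field; lra).
  set (x := r / rt).
  assert (Hx : x * rt = r) by (unfold x; field; lra).
  assert (Hx0 : 0 <= x) by (unfold x, Rdiv; apply Rmult_le_pos; [lra| left; apply Rinv_0_lt_compat; lra]).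
  destruct (Rle_lt_dec x B) as [H|H].
  - apply Rle_trans with x; [apply J_le_ratio; lra | exact H].
  - assert (Hc : (3 - s) * rt < (1 - s) * r).
    { rewrite <- HB, <- Hx.
      assert (0 < (1 - s) * rt) by (apply Rmult_lt_0_compat; lra).
      nra. }
    assert (HD : 0 < (1 - s) * r - 2) by nra.
    unfold J. fold x.
    apply Rle_trans with (x * (((3 - s) * rt - 2) / ((1 - s) * r - 2))).
    + apply Rmult_le_compat_l; [lra | apply Rmin_r].
    + assert (E : B - x * (((3 - s) * rt - 2) / ((1 - s) * r - 2)) =
                2 * ((1 - s) * r - (3 - s) * rt) / ((1 - s) * rt * ((1 - s) * r - 2))).
      { unfold B, x. field. repeat split; lra. }
      assert (0 <= 2 * ((1 - s) * r - (3 - s) * rt) / ((1 - s) * rt * ((1 - s) * r - 2))).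
      { unfold Rdiv. apply Rmult_le_pos; [lra|]. left. apply Rinv_0_lt_compat.
        apply Rmult_lt_0_compat; [apply Rmult_lt_0_compat|]; lra. }
      lra.
Qed.

Lemma Rmin_1_ge a : 1 <= a -> Rmin 1 a = 1.
Proof. intros; unfold Rmin; destruct (Rle_dec 1 a); lra. Qed.

Theorem lemma3p3 (s : R) (hs0 : 0 < s) (hs1 : s < 1) :
  (* case 0 < s <= 1/4 *)
  (s <= 1/4 ->
     (forall r rt, inK s r rt -> J s r rt <= 6 / (3 - 4 * s)) /\
     inK s (6 / (3 - 4 * s)) 1 /\
     J s (6 / (3 - 4 * s)) 1 = 6 / (3 - 4 * s)) /\
  (* case 1/4 <= s <= 1/2 *)
  (1/4 <= s <= 1/2 ->
     (forall r rt, inK s r rt -> J s r rt <= (7 - 4 * s) / (3 - 4 * s)) /\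
     inK s (6 / (3 - 4 * s)) (6 / (7 - 4 * s)) /\
     J s (6 / (3 - 4 * s)) (6 / (7 - 4 * s)) = (7 - 4 * s) / (3 - 4 * s)) /\
  (* case 1/2 <= s < 1 *)
  (1/2 <= s ->
     (forall r rt, inK s r rt -> J s r rt <= (3 - s) / (1 - s)) /\
     (forall r,
        6 / (7 - 4 * s) * ((3 - s) / (1 - s)) <= r ->
        (s <= 3 - sqrt 6 -> r <= 6 / (3 - 4 * s)) ->
        (3 - sqrt 6 <= s -> r <= 2 / (2 - s) * ((3 - s) / (1 - s))) ->
        inK s r ((1 - s) / (3 - s) * r) /\
        J s r ((1 - s) / (3 - s) * r) = (3 - s) / (1 - s))).
Proof.
  set (a := 6 / (7 - 4 * s)).
  assert (Ha : a * (7 - 4 * s) = 6) by (unfold a; field; lra).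
  set (m := Rmax 1 a).
  assert (Hm1 : 1 <= m) by apply Rmax_l.
  assert (Hma : a <= m) by apply Rmax_r.
  set (c := 2 / (2 - s)).
  assert (Hc : c * (2 - s) = 2) by (unfold c; field; lra).
  split; [|split].
  - intro H14.
    set (b := 6 / (3 - 4 * s)).
    assert (Hb : b * (3 - 4 * s) = 6) by (unfold b; field; lra).
    assert (Hb2 : 2 <= b) by nra.
    split; [|split].
    + intros r rt [H1 [H2 [H3 H4]]]; fold a in H3; fold m in H3; fold c in H4.
      assert (r <= b) by (apply H2; lra).
      apply Rle_trans with (r / rt); [apply J_le_ratio; lra|].
      assert (r / rt * rt = r) by (field; lra).
      nra.
    + unfold inK. fold a b c. split; [lra|split; [intro; lra|split]].
      * unfold m, Rmax; destruct (Rle_dec 1 a); nra.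
      * nra.
    + unfold J. fold b. rewrite Rmin_1_ge; [unfold Rdiv; rewrite Rinv_1; ring|].
      assert (E : (3 - s) * 1 - 2 = 1 - s) by lra.
      rewrite E.
      assert (HD : (1 - s) * b - 2 = 2 * s / (3 - 4 * s)) by (unfold b; field; lra).
      rewrite HD.
      assert (E2 : (1 - s) / (2 * s / (3 - 4 * s)) = (1 - s) * (3 - 4 * s) / (2 * s)) by (field; lra).
      rewrite E2.
      assert (Hq : (1 - s) * (3 - 4 * s) / (2 * s) * (2 * s) = (1 - s) * (3 - 4 * s)) by (field; lra).
      nra.
  - intros [H14 H12].
    set (b := 6 / (3 - 4 * s)).
    assert (Hb : b * (3 - 4 * s) = 6) by (unfold b; field; lra).
    assert (Hb2 : 2 <= b) by nra.
    assert (Ha1 : 1 <= a) by nra.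
    split; [|split].
    + intros r rt [H1 [H2 [H3 H4]]]; fold a in H3; fold m in H3; fold c in H4.
      assert (r <= b) by (apply H2; lra).
      apply Rle_trans with (r / rt); [apply J_le_ratio; lra|].
      assert (r / rt * rt = r) by (field; lra).
      assert (E : (7 - 4 * s) / (3 - 4 * s) = b / a) by (unfold a, b; field; lra).
      rewrite E.
      assert (b / a * a = b) by (unfold a, b; field; lra).
      assert (rt >= a) by lra.
      assert (Hy : 0 <= b / a) by (unfold Rdiv; apply Rmult_le_pos; [lra| left; apply Rinv_0_lt_compat; lra]).
      assert (0 <= b / a * (rt - a)) by (apply Rmult_le_pos; lra).
      apply Rmult_le_reg_r with rt; [lra|]. lra.
    + unfold inK. fold a b c. split; [lra|split; [intro; lra|split]].
      * unfold m, Rmax; destruct (Rle_dec 1 a); lra.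
      * unfold a, c. apply Rmult_le_reg_r with ((7 - 4 * s) * (2 - s)); [nra|].
        field_simplify; lra.
    + unfold J. fold a b.
      assert (E0 : b / a = (7 - 4 * s) / (3 - 4 * s)) by (unfold a, b; field; lra).
      rewrite Rmin_1_ge; [rewrite Rmult_1_r; exact E0|].
      assert (HN : (3 - s) * a - 2 = (4 + 2 * s) / (7 - 4 * s)) by (unfold a; field; lra).
      assert (HD : (1 - s) * b - 2 = 2 * s / (3 - 4 * s)) by (unfold b; field; lra).
      rewrite HN, HD.
      assert (E2 : (4 + 2 * s) / (7 - 4 * s) / (2 * s / (3 - 4 * s)) =
                   (4 + 2 * s) * (3 - 4 * s) / (2 * s * (7 - 4 * s))) by (field; lra).
      rewrite E2.
      assert (Hq : (4 + 2 * s) * (3 - 4 * s) / (2 * s * (7 - 4 * s)) * (2 * s * (7 - 4 * s))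
                   = (4 + 2 * s) * (3 - 4 * s)) by (field; lra).
      assert (0 < 2 * s * (7 - 4 * s)) by nra.
      nra.
  - intro H12.
    assert (Ha1 : 1 <= a) by nra.
    assert (Hma' : m = a) by (unfold m, Rmax; destruct (Rle_dec 1 a); lra).
    split.
    + intros r rt [H1 [H2 [H3 H4]]]; fold a in H3; fold m in H3; fold c in H4.
      apply J_le_B; lra.
    + intros r Hr Hlo Hhi. fold a in Hr. fold c in Hhi.
      set (B := (3 - s) / (1 - s)) in *.
      assert (HB : B * (1 - s) = 3 - s) by (unfold B; field; lra).
      set (k := (1 - s) / (3 - s)).
      assert (Hk : k * (3 - s) = 1 - s) by (unfold k; field; lra).
      assert (HkB : k * B = 1) by (unfold k, B; field; lra).
      assert (HS6 : sqrt 6 * sqrt 6 = 6) by (apply sqrt_sqrt; lra).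
      assert (HS0 : 0 <= sqrt 6) by apply sqrt_pos.
      assert (Hk0 : 0 < k) by (unfold k; apply Rdiv_lt_0_compat; lra).
      assert (Hkr : k * r >= a).
      { assert (k * (a * B) <= k * r) by (apply Rmult_le_compat_l; [lra | exact Hr]).
        nra. }
      assert (HaB : a * B * (7 - 4 * s) * (1 - s) = 6 * (3 - s)) by nra.
      assert (Hr2 : 2 <= r).
      { assert (2 <= a * B) by nra. lra. }
      assert (HD : (1 - s) * r - 2 > 0) by nra.
      split.
      * unfold inK. fold a c m k. rewrite Hma'.
        split; [lra|split; [|split; [lra|]]].
        -- intro H34. destruct (Rle_lt_dec s (3 - sqrt 6)) as [Hs|Hs].
           ++ apply Hlo; lra.
           ++ apply Rle_trans with (c * B); [apply Hhi; lra|].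
              set (b := 6 / (3 - 4 * s)).
              assert (Hq : (3 - s) * (3 - s) <= 6) by nra.
              assert (E : b - c * B = - 2 * (3 - 6 * s + s * s) / ((3 - 4 * s) * (2 - s) * (1 - s)))
                by (unfold b, c, B; field; repeat split; lra).
              assert (0 <= - 2 * (3 - 6 * s + s * s) / ((3 - 4 * s) * (2 - s) * (1 - s))).
              { unfold Rdiv. apply Rmult_le_pos; [nra|]. left. apply Rinv_0_lt_compat.
                apply Rmult_lt_0_compat; [apply Rmult_lt_0_compat|]; lra. }
              lra.
        -- destruct (Rle_lt_dec s (3 - sqrt 6)) as [Hs|Hs].
           ++ assert (Hs6 : 9/4 < sqrt 6) by nra.
              assert (H34 : 0 < 3 - 4 * s) by lra.
              set (b := 6 / (3 - 4 * s)) in *.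
              assert (Hrb : r <= b) by (apply Hlo; lra).
              assert (Hq : (3 - s) * (3 - s) >= 6) by nra.
              apply Rle_trans with (k * b).
              ** apply Rmult_le_compat_l; [lra | exact Hrb].
              ** assert (E : c - k * b = 2 * (3 - 6 * s + s * s) / ((2 - s) * (3 - s) * (3 - 4 * s)))
                   by (unfold b, c, k; field; repeat split; lra).
                 assert (0 <= 2 * (3 - 6 * s + s * s) / ((2 - s) * (3 - s) * (3 - 4 * s))).
                 { unfold Rdiv. apply Rmult_le_pos; [nra|]. left. apply Rinv_0_lt_compat.
                   apply Rmult_lt_0_compat; [apply Rmult_lt_0_compat|]; lra. }
                 lra.
           ++ assert (Hrr : r <= c * B) by (apply Hhi; lra).
              assert (k * r <= k * (c * B)) by (apply Rmult_le_compat_l; [lra | exact Hrr]).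
              nra.
      * unfold J. fold k.
        assert (E1 : (3 - s) * (k * r) - 2 = (1 - s) * r - 2) by (unfold k; field; lra).
        rewrite E1. rewrite Rmin_1_ge.
        -- unfold k, B. field. repeat split; nra.
        -- unfold Rdiv. rewrite Rinv_r; lra.
Qed.
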